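(* Let $\boldsymbol\mu\subset\mathfrak G^{\mathrm{small}}$ be a ratio set. Assume $\boldsymbol\mu$ witnesses $V\in\mathbb T$, the series $S=\sum_{j\ge1}B_j$ converges $\boldsymbol\mu$-geometrically, and for $j=1,2,3,\dots$, $\boldsymbol\mu$ witnesses $A_j$ and $A_j\sim B_jV$. Then $T=\sum_{j\ge1}A_j$ converges $\boldsymbol\mu$-geometrically and $T\sim SV$.
   Context: $\mathbb T$ is the field of real grid-based transseries over the ordered group $\mathfrak G$ of transmonomials, with $\sim$ the usual asymptotic equivalence ($A\sim B$ iff $A-B\prec A$); $\operatorname{mag}T$ is the dominant monomial of $T\ne0$. A ratio set is a finite $\boldsymbol\mu\subset\mathfrak G^{\mathrm{small}}=\{\mathfrak g\prec1\}$; $\boldsymbol\mu^*$ (resp. $\boldsymbol\mu^+$) is the set of products of zero or more (resp. one or more) elements of $\boldsymbol\mu$. Monomials: $\mathfrak m\prec^{\boldsymbol\mu}\mathfrak n$ iff $\mathfrak m/\mathfrak n\in\boldsymbol\mu^+$; transseries: $A\prec^{\boldsymbol\mu}B$ (also written $B\succ^{\boldsymbol\mu}A$) iff each $\mathfrak a\in\operatorname{supp}A$ is $\prec^{\boldsymbol\mu}$ some $\mathfrak b\in\operatorname{supp}B$. $\boldsymbol\mu$ witnesses nonzero $T$ iff $\operatorname{supp}T\subseteq(\operatorname{mag}T)\boldsymbol\mu^*$. A series $\sum_{j\ge1}A_j$ is $\boldsymbol\mu$-geometrically convergent if $\boldsymbol\mu$ witnesses each $A_j$ and $A_j\succ^{\boldsymbol\mu}A_{j+1}$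 for all $j$; such a series converges (point-finitely) in $\mathbb T$. *)

(* Defs.v *)
From HB Require Import structures.
From mathcomp Require Import all_boot all_order all_algebra.
From mathcomp Require Import boolp classical_sets fsbigop reals.

Set Implicit Arguments.
Unset Strict Implicit.
Unset Printing Implicit Defensive.
Import Order.TTheory GRing.Theory Num.Theory.
Local Open Scope classical_set_scope.
Local Open Scope ring_scope.

(* A (multiplicatively written) totally ordered abelian group of monomials.
   [og_lt m n] is m ≺ n ("m is smaller than n"). *)
Record ogroup := OGroup {
  og_car :> choiceType;
  og_mul : og_car -> og_car -> og_car;
  og_one : og_car;
  og_inv : og_car -> og_car;
  og_lt  : og_car -> og_car -> Prop;
  og_mulA : forall x y z, og_mul x (og_mul y z) = og_mul (og_mul x y) z;
  og_mulC : forall x y, og_mul x y = og_mul y x;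
  og_mul1 : forall x, og_mul og_one x = x;
  og_mulV : forall x, og_mul (og_inv x) x = og_one;
  og_lt_irr : forall x, ~ og_lt x x;
  og_lt_trans : forall x y z, og_lt x y -> og_lt y z -> og_lt x z;
  og_lt_total : forall x y, og_lt x y \/ x = y \/ og_lt y x;
  og_lt_mul : forall x y z, og_lt x y -> og_lt (og_mul x z) (og_mul y z)
}.

Section Series.
Variables (G : ogroup) (R : realType).


Definition tseries := G -> R.

Definition supp (A : tseries) : set G := [set m | A m != 0].

Definition is_mag (A : tseries) (m : G) : Prop :=
  supp A m /\ forall n, supp A n -> og_lt n m \/ n = m.

Definition ratio_set (mu : seq G) : Prop :=
  forall g, g \in mu -> og_lt g (og_one G).

Definition prodG (s : seq G) : G := foldr (@og_mul G) (og_one G) s.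

Definition mustar (mu : seq G) : set G :=
  [set g | exists s : seq G, {subset s <= mu} /\ g = prodG s].
Definition muplus (mu : seq G) : set G :=
  [set g | exists s : seq G, s != [::] /\ {subset s <= mu} /\ g = prodG s].

Definition mprec (mu : seq G) (m n : G) : Prop :=
  muplus mu (og_mul m (og_inv n)).

Definition sprec (mu : seq G) (A B : tseries) : Prop :=
  forall a, supp A a -> exists2 b, supp B b & mprec mu a b.

Definition witnesses (mu : seq G) (T : tseries) : Prop :=
  exists m, is_mag T m /\
    forall a, supp T a -> exists2 g, mustar mu g & a = og_mul m g.

Definition tprec (A B : tseries) : Prop :=
  exists mb, is_mag B mb /\ forall a, supp A a -> og_lt a mb.

Definition tsub (A B : tseries) : tseries := fun g => A g - B g.

Definition tsim (A B : tseries) : Prop := tprec (tsub A B) A.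

(* product of series (Cauchy product; finite sums for grid-based series) *)
Definition tmul (A B : tseries) : tseries := fun g =>
  \sum_(p \in [set p : G * G | og_mul p.1 p.2 = g]) (A p.1 * B p.2).

Definition tsum (A : nat -> tseries) : tseries := fun g =>
  \sum_(j \in [set j : nat | (0 < j)%N]) A j g.

Definition geom_conv (mu : seq G) (A : nat -> tseries) : Prop :=
  forall j, (0 < j)%N -> witnesses mu (A j) /\ sprec mu (A j.+1) (A j).

End Series.

(* Main.v *)
Require Import Defs.
From HB Require Import structures.
From mathcomp Require Import all_boot all_order all_algebra.
From mathcomp Require Import boolp classical_sets fsbigop reals.
Set Implicit Arguments.
Unset Strict Implicit.
Unset Printing Implicit Defensive.
Import Order.TTheory GRing.Theory Num.Theory.
Local Open Scope classical_set_scope.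
Local Open Scope ring_scope.

Section Aux.
Variable (G : ogroup).
Local Notation mul := (@og_mul G).
Local Notation one := (og_one G).
Local Notation lt := (@og_lt G).
Definition ole (x y : G) := lt x y \/ x = y.

Lemma mul1r' (x : G) : mul x one = x.
Proof. by rewrite og_mulC og_mul1. Qed.

Lemma mulV' (x : G) : mul x (og_inv x) = one.
Proof. by rewrite og_mulC og_mulV. Qed.

Lemma og_mulCA (x y z : G) : mul x (mul y z) = mul y (mul x z).
Proof. by rewrite og_mulA (og_mulC x) -og_mulA. Qed.

Lemma lt_mul_l (x y z : G) : lt x y -> lt (mul z x) (mul z y).
Proof. by move=> h; rewrite ![mul z _]og_mulC; apply: og_lt_mul. Qed.

Lemma lt_le_trans (x y z : G) : lt x y -> ole y z -> lt x z.
Proof. by move=> h [h'|<-] //; apply: og_lt_trans h h'. Qed.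

Lemma le_lt_trans (x y z : G) : ole x y -> lt y z -> lt x z.
Proof. by move=> [h|->] h' //; apply: og_lt_trans h h'. Qed.

Lemma le_trans' (x y z : G) : ole x y -> ole y z -> ole x z.
Proof. by move=> [h|->] // h'; left; apply: lt_le_trans h h'. Qed.

Lemma lt_nle (x y : G) : lt x y -> ole y x -> False.
Proof. by move=> h h'; apply: (og_lt_irr (le_lt_trans h' h)). Qed.

Lemma lt_mul_lt_le (a b c d : G) : lt a b -> ole c d -> lt (mul a c) (mul b d).
Proof.
move=> h [h'|<-]; last exact: og_lt_mul.
apply: og_lt_trans (og_lt_mul c h) _; exact: lt_mul_l.
Qed.

Lemma lt_mul_le_lt (a b c d : G) : ole a b -> lt c d -> lt (mul a c) (mul b d).
Proof. by move=> h h'; rewrite og_mulC (og_mulC b); apply: lt_mul_lt_le. Qed.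

Lemma le_mul (a b c d : G) : ole a b -> ole c d -> ole (mul a c) (mul b d).
Proof.
move=> [h|->] h'; first by left; apply: lt_mul_lt_le.
case: h' => [h'|->]; [left; exact: lt_mul_l | by right].
Qed.

Lemma le_mul_eq (a b c d : G) : ole a b -> ole c d -> mul a c = mul b d ->
  a = b /\ c = d.
Proof.
move=> [h|->] h' e.
  by have := lt_mul_lt_le h h'; rewrite e => /og_lt_irr.
case: h' e => [h'|->] // e.
by have := lt_mul_l b h'; rewrite e => /og_lt_irr.
Qed.

Lemma prodG_cat (s t : seq G) : prodG (s ++ t) = mul (prodG s) (prodG t).
Proof.
elim: s => [|x s IH] /=; first by rewrite og_mul1.
by rewrite IH og_mulA.
Qed.

Variable mu : seq G.
Hypothesis Hmu : ratio_set mu.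

Lemma prod_le1 (s : seq G) : {subset s <= mu} -> ole (prodG s) one.
Proof.
elim: s => [|x s IH] sub /=; first by right.
have hx : lt x one by apply: Hmu; apply: sub; rewrite inE eqxx.
have hs : ole (prodG s) one by apply: IH => y ys; apply: sub; rewrite inE ys orbT.
left; rewrite -(og_mul1 one); exact: lt_mul_lt_le.
Qed.

Lemma muplus_lt1 p : muplus mu p -> lt p one.
Proof.
case=> s [nz [sub ->]]; case: s nz sub => [//|x s] _ sub /=.
have hx : lt x one by apply: Hmu; apply: sub; rewrite inE eqxx.
have hs : ole (prodG s) one by apply: prod_le1 => y ys; apply: sub; rewrite inE ys orbT.
rewrite -(og_mul1 one); exact: lt_mul_lt_le.
Qed.

Lemma mprecP a b : mprec mu a b <-> exists2 p, muplus mu p & a = mul b p.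
Proof.
split.
  move=> h; exists (mul a (og_inv b)) => //.
  by rewrite (og_mulC a) og_mulA mulV' og_mul1.
case=> p hp ->; rewrite /mprec.
by rewrite (og_mulC b) -og_mulA mulV' mul1r'.
Qed.

Lemma muplus_mul3 q p g : mustar mu q -> muplus mu p -> mustar mu g ->
  muplus mu (mul q (mul p g)).
Proof.
case=> [sq [hq ->]] [sp [np [hp ->]]] [sg [hg ->]].
exists (sq ++ sp ++ sg); split.
  by case: sq {hq} => //=; case: sp np hp.
split; last by rewrite !prodG_cat.
by move=> x; rewrite !mem_cat => /or3P[/hq|/hp|/hg].
Qed.


Variable R : realType.
Implicit Types (A B V : tseries G R).

Lemma mag_uniq A m m' : is_mag A m -> is_mag A m' -> m = m'.
Proof.
move=> [s1 h1] [s2 h2]; case: (h1 _ s2) => // l1; case: (h2 _ s1) => // l2.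
by have := og_lt_trans l1 l2 => /og_lt_irr.
Qed.

Lemma supp_le A m n : is_mag A m -> A n != 0 -> ole n m.
Proof. by move=> [_ h] /h. Qed.

Lemma fsum_nz (I : choiceType) (P : set I) (F : I -> R) :
  (\sum_(i \in P) F i) != 0 -> exists i, P i /\ F i != 0.
Proof.
move=> h; apply: contrapT => hn; move/eqP: h; apply.
apply: fsbig1 => i Pi; apply/eqP; apply: contrapT => Fi; apply: hn.
by exists i; split => //; apply/negP.
Qed.

Lemma fsum_single (I : choiceType) (P : set I) (F : I -> R) i0 :
  P i0 -> (forall i, P i -> i <> i0 -> F i = 0) -> \sum_(i \in P) F i = F i0.
Proof.
move=> P0 h; rewrite -(fsbig_widen [set i0] P F).
- by rewrite fsbig_set1.
- by move=> i ->.
- by move=> i [Pi ni]; apply: h.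
Qed.

Lemma tmul_supp A B ma mb g : is_mag A ma -> is_mag B mb ->
  tmul A B g != 0 -> ole g (mul ma mb).
Proof.
move=> hA hB /fsum_nz [[p1 p2] [/= <- nz]].
rewrite mulf_eq0 negb_or in nz; case/andP: nz => n1 n2.
by apply: le_mul; [apply: supp_le hA n1 | apply: supp_le hB n2].
Qed.

Lemma tmul_top A B ma mb : is_mag A ma -> is_mag B mb ->
  tmul A B (mul ma mb) = A ma * B mb.
Proof.
move=> hA hB; rewrite /tmul (fsum_single (i0 := (ma, mb))) //.
move=> [p1 p2] /= e ne; apply/eqP; apply: contrapT => nz; apply: ne.
move/negP: nz; rewrite mulf_eq0 negb_or => /andP[n1 n2].
have [-> ->] := le_mul_eq (supp_le hA n1) (supp_le hB n2) e; done.
Qed.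

Lemma magnz A m : is_mag A m -> A m != 0.
Proof. by case. Qed.

Lemma tsim_mag A B V mb mv : is_mag B mb -> is_mag V mv ->
  tsim A (tmul B V) -> is_mag A (mul mb mv) /\ A (mul mb mv) = B mb * V mv.
Proof.
move=> hB hV [mA [hA hs]].
set m := mul mb mv.
have top : tmul B V m = B mb * V mv by apply: tmul_top.
have topnz : tmul B V m != 0 by rewrite top mulf_neq0 ?magnz.
have Hsub g : tsub A (tmul B V) g != 0 -> lt g mA by apply: hs.
case: (og_lt_total m mA) => [l|[e|l]].
- exfalso; have z : tmul B V mA = 0.
    apply/eqP; apply: contrapT => /negP nz.
    exact: lt_nle l (tmul_supp hB hV nz).
  have : tsub A (tmul B V) mA != 0 by rewrite /tsub z subr0 magnz.
  by move/Hsub/og_lt_irr.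
- rewrite -e in hA; split => //.
  apply/eqP; apply: contrapT => /negP ne; rewrite -top in ne.
  have : tsub A (tmul B V) m != 0 by rewrite /tsub subr_eq0.
  by move/Hsub; rewrite -e => /og_lt_irr.
- exfalso; have z : A m = 0.
    apply/eqP; apply: contrapT => /negP nz.
    exact: lt_nle l (supp_le hA nz).
  have : tsub A (tmul B V) m != 0 by rewrite /tsub z sub0r oppr_eq0.
  by move/Hsub => l'; apply: og_lt_irr (og_lt_trans l l').
Qed.

End Aux.

Theorem lemma3p21 (G : ogroup) (R : realType) (mu : seq G)
    (V : tseries G R) (A B : nat -> tseries G R) :
  ratio_set mu ->
  witnesses mu V ->
  geom_conv mu B ->
  (forall j, (0 < j)%N -> witnesses mu (A j) /\ tsim (A j) (tmul (B j) V)) ->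
  geom_conv mu A /\ tsim (tsum A) (tmul (tsum B) V).
Proof.
move=> Hmu [mV [hV _]] hB hA.
have magB j : (0 < j)%N -> exists m, is_mag (B j) m.
  by move=> hj; case: (hB j hj).1 => m [h _]; exists m.
have [mB1 hB1] := magB 1%N isT.
have step j : (0 < j)%N -> forall m m', is_mag (B j.+1) m -> is_mag (B j) m' ->
    og_lt m m'.
  move=> hj m m' hm hm'.
  have [b sb /mprecP [p hp ep]] := (hB j hj).2 m (magnz hm).
  apply: lt_le_trans (supp_le hm' sb).
  rewrite ep -{2}(mul1r' b); apply: lt_mul_l; exact: muplus_lt1 hp.
have chain k m : is_mag (B k.+2) m -> og_lt m mB1.
  elim: k m => [|k IH] m hm; first exact: step hm hB1.
  have [m' hm'] := magB k.+2 isT.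
  exact: og_lt_trans (step k.+2 isT m m' hm hm') (IH m' hm').
have Bbound j : (0 < j)%N -> forall g, B j g != 0 ->
    ole g mB1 /\ ((1 < j)%N -> og_lt g mB1).
  case: j => [//|[|k]] _ g nz.
    by split => //; apply: supp_le hB1 nz.
  have [m hm] := magB k.+2 isT.
  have l := le_lt_trans (supp_le hm nz) (chain _ _ hm).
  by split => //; left.
set m := og_mul mB1 mV.
have Abound j : (0 < j)%N -> forall g, A j g != 0 ->
    ole g m /\ ((1 < j)%N -> og_lt g m).
  move=> hj g nz.
  have [mj hmj] := magB j hj.
  have [hAj _] := tsim_mag hmj hV (hA j hj).2.
  have := Bbound j hj mj (magnz hmj) => -[le1 lt1].
  have lg := supp_le hAj nz.
  split; first by apply: le_trans' lg (le_mul le1 _); right.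
  by move=> h1; apply: le_lt_trans lg (lt_mul_lt_le (lt1 h1) _); right.
have Sval : tsum B mB1 = B 1%N mB1.
  apply: fsum_single => // j /= hj n1; apply/eqP; apply: contrapT => /negP nz.
  have := (Bbound j hj _ nz).2; case: j hj n1 {nz} => [|[|j]] //= _ _.
  by move/(_ isT)/og_lt_irr.
have hS : is_mag (tsum B) mB1.
  split; first by rewrite /supp /= Sval magnz.
  move=> n /fsum_nz [j [hj nz]]; exact: (Bbound j hj n nz).1.
have Tval : tsum A m = A 1%N m.
  apply: fsum_single => // j /= hj n1; apply/eqP; apply: contrapT => /negP nz.
  have := (Abound j hj _ nz).2; case: j hj n1 {nz} => [|[|j]] //= _ _.
  by move/(_ isT)/og_lt_irr.
have Tle g : tsum A g != 0 -> ole g m.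
  by move=> /fsum_nz [j [hj nz]]; exact: (Abound j hj g nz).1.
have [hA1 A1v] := tsim_mag hB1 hV (hA 1%N isT).2.
have SVv : tmul (tsum B) V m = B 1%N mB1 * V mV by rewrite tmul_top // Sval.
split.
  move=> j hj; split; first exact: (hA j hj).1.
  move=> a sa.
  have [mj hmj] := magB j hj.
  have [mj' hmj'] := magB j.+1 isT.
  have [hAj _] := tsim_mag hmj hV (hA j hj).2.
  have [hAj' _] := tsim_mag hmj' hV (hA j.+1 isT).2.
  have [ma [hma wa]] := (hA j.+1 isT).1.
  have ema := mag_uniq hma hAj'; subst ma.
  have [g hg ea] := wa a sa.
  have [b sb /mprecP [p hp ep]] := (hB j hj).2 mj' (magnz hmj').
  have [mb [hmb wb]] := (hB j hj).1.
  have emb := mag_uniq hmb hmj; subst mb.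
  have [q hq eb] := wb b sb.
  exists (og_mul mj mV); first exact: magnz hAj.
  apply/mprecP; exists (og_mul q (og_mul p g)); first exact: muplus_mul3.
  rewrite ea ep eb.
  rewrite -!og_mulA; congr (og_mul mj _).
  by rewrite (og_mulCA p) (og_mulCA q).
exists m; split.
  split; first by rewrite /supp /= Tval magnz.
  by move=> n /Tle.
move=> g nz; case: (og_lt_total g m) => [//|[e|l]].
  by move: nz; rewrite /supp /= /tsub e Tval SVv A1v subrr eqxx.
exfalso; move: nz; rewrite /supp /= /tsub.
have -> : tsum A g = 0.
  by apply/eqP; apply: contrapT => /negP /Tle /(lt_nle l).
have -> : tmul (tsum B) V g = 0.
  by apply/eqP; apply: contrapT => /negP /(tmul_supp hS hV) /(lt_nle l).
by rewrite subrr eqxx.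
Qed.
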